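(* $V(D_k)\le S\cdot LIN(D_k)\le S\cdot OPT(D_k)\le S\cdot LIN(D_k)+\frac{S\,(m(D_k)+k)}{2}$.
   Context: Let $S>0$, let $D$ be a finite multiset of items with sizes in $(0,S]$ and $k\ge1$ an integer. $D_k$ is the collection of $k$ copies of each item of $D$; $V(D_k)$ is its total size. A $k$-times bin packing assigns all copies to bins with total size at most $S$ per bin and no two copies of the same item in one bin; $OPT(D_k)$ is the minimum number of bins. Let $c[1],\dots,c[m]$ be the distinct item sizes of $D$, $m(D_k)=m(D)=m$, $n[i]$ the number of items of size $c[i]$, $\mathbf{n}=(n[1],\dots,n[m])$. A configuration is a vector $a\in\mathbb{Z}^m_{\ge0}$ with $a_i\le n[i]$ and $\sum_ia_ic[i]\le S$; $A$ is the $m\times t$ matrix whose columns are all configurations. $LIN(D_k)$ is the optimal value of the linear program: minimize $\mathbf{1}\cdot\mathbf{x}$ subject to $A\mathbf{x}=k\mathbf{n}$, $\mathbf{x}\in\mathbb{R}^t_{\ge0}$. *)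

(* Defs.v *)
From HB Require Import structures.
From mathcomp Require Import all_boot all_order all_algebra.
From mathcomp Require Import boolp classical_sets reals.
Set Implicit Arguments. Unset Strict Implicit. Unset Printing Implicit Defensive.
Import Order.TTheory GRing.Theory Num.Theory.
Local Open Scope ring_scope.
Local Open Scope classical_set_scope.

Section KBinPacking.
Variables (R : realType) (S : R) (n : nat) (c : 'I_n -> R) (k : nat).
(* D is the multiset of n items, item i having size c i. *)

(* V(D_k): total size of k copies of every item *)
Definition VDk : R := k%:R * \sum_(i < n) c i.

Definition dsizes : seq R := undup [seq c i | i <- enum 'I_n].
Definition mD : nat := size dsizes.
Definition csz (i : 'I_mD) : R := nth 0 dsizes i.
Definition nsz (i : 'I_mD) : nat := #|[set j : 'I_n | c j == csz i]|.

(* candidate vectors a in Z_{>=0}^m; entries bounded by n (a_i <= n[i] <= n) *)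
Definition cand := {ffun 'I_mD -> 'I_n.+1}.
Definition is_config (a : cand) : bool :=
  [forall i, (a i <= nsz i)%N] && (\sum_(i < mD) (a i)%:R * csz i <= S).

(* feasible points of the LP  A x = k n, x >= 0 (x indexed by configurations) *)
Definition lp_feasible (x : cand -> R) : Prop :=
  (forall a, is_config a -> 0 <= x a) /\
  (forall i : 'I_mD,
     \sum_(a : cand | is_config a) (a i)%:R * x a = (k * nsz i)%:R).
Definition lp_value (x : cand -> R) : R := \sum_(a : cand | is_config a) x a.

Definition LIN : R := inf [set v | exists x, lp_feasible x /\ v = lp_value x].

(* a k-times bin packing into N bins: copy j of item i goes to bin f i j *)
Definition packing (N : nat) (f : 'I_n -> 'I_k -> 'I_N) : Prop :=
  (forall i, injective (f i)) /\
  (forall b : 'I_N, \sum_(p : 'I_n * 'I_k | f p.1 p.2 == b) c p.1 <= S).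
Definition packable (N : nat) : Prop := exists f, packing (N:=N) f.

Definition OPT : R := inf [set (N%:R : R) | N in packable].
End KBinPacking.

(* Main.v *)
Require Import Defs.
From HB Require Import structures.
From mathcomp Require Import all_boot all_order all_algebra.
From mathcomp Require Import boolp classical_sets reals.
From mathcomp Require Import zify ring lra.
Import Order.TTheory GRing.Theory Num.Theory.
Local Open Scope ring_scope.
Set Implicit Arguments. Unset Strict Implicit. Unset Printing Implicit Defensive.

Section Proofs.
Variables (R : realType) (S : R) (n : nat) (c : 'I_n -> R) (k : nat).
Hypothesis Spos : 0 < S.
Hypothesis cpos : forall i, 0 < c i <= S.

Local Notation m := (mD c).
Lemma in_mkset (T : Type) (P : pred T) x : (x \in [set y | P y]%classic) = P x.
Proof. by apply/idP/idP; rewrite in_setE. Qed.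
Local Notation csz := (@csz R n c).
Local Notation nsz := (@nsz R n c).

Lemma dsizes_uniq : uniq (dsizes c). Proof. exact: undup_uniq. Qed.
Lemma mem_c j : c j \in dsizes c. Proof. by rewrite mem_undup map_f // mem_enum. Qed.
Lemma cls_lt j : (index (c j) (dsizes c) < m)%N. Proof. by rewrite index_mem mem_c. Qed.
Definition cls j : 'I_m := Ordinal (cls_lt j).
Lemma csz_cls j : csz (cls j) = c j. Proof. by rewrite /Defs.csz /= nth_index // mem_c. Qed.
Lemma csz_inj : injective csz.
Proof.
move=> i i' /eqP; rewrite /Defs.csz nth_uniq ?dsizes_uniq //; by move/eqP/val_inj.
Qed.
Lemma c_cls j i : (c j == csz i) = (cls j == i).
Proof. rewrite -csz_cls; apply/eqP/eqP => [/csz_inj|->] //. Qed.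
Lemma csz_ex i : exists j, c j = csz i.
Proof.
have : csz i \in dsizes c by rewrite /Defs.csz mem_nth.
rewrite mem_undup => /mapP [j _ ->]; by exists j.
Qed.
Lemma csz_pos i : 0 < csz i <= S.
Proof. by case: (csz_ex i) => j <-. Qed.
Lemma csz_ge0 i : 0 <= csz i.
Proof. by case/andP: (csz_pos i) => /ltW. Qed.
Lemma nszE i : nsz i = #|[set j | cls j == i]%SET|.
Proof. rewrite /Defs.nsz; apply: eq_card => j; by rewrite in_mkset inE c_cls. Qed.
Lemma nsz_pos i : (0 < nsz i)%N.
Proof. case: (csz_ex i) => j cj; rewrite nszE; apply/card_gt0P; exists j; by rewrite inE -c_cls cj. Qed.
Lemma nsz_le i : (nsz i <= n)%N.
Proof. rewrite /Defs.nsz; apply: leq_trans (max_card _) _; by rewrite card_ord. Qed.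

Definition nvec := {ffun 'I_m -> nat}.
Definition load (b : nvec) : R := \sum_i (b i)%:R * csz i.
Definition ncfg (b : nvec) := [forall i, (b i <= nsz i)%N] && (load b <= S).
Definition cover (bs : seq nvec) i := (\sum_(b <- bs) b i)%N.
Definition addv (b : nvec) i : nvec := [ffun j => (b j + (j == i))%N].
Definition zv : nvec := [ffun => 0%N].

Lemma load_ge0 b : 0 <= load b.
Proof. apply: sumr_ge0 => i _; by rewrite mulr_ge0 // csz_ge0. Qed.
Lemma load_addv b i : load (addv b i) = load b + csz i.
Proof.
rewrite /load (eq_bigr (fun j => (b j)%:R * csz j + (j == i)%:R * csz j)); last first.
  by move=> j _; rewrite ffunE natrD mulrDl.
rewrite big_split /=; congr (_ + _).
rewrite (bigD1 i) //= eqxx mul1r big1 ?addr0 // => j /negbTE ->; by rewrite mul0r.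
Qed.
Lemma load_zv : load zv = 0.
Proof. rewrite /load big1 // => i _; by rewrite ffunE mul0r. Qed.
Lemma cover_cons b bs i : cover (b :: bs) i = (b i + cover bs i)%N.
Proof. by rewrite /cover big_cons. Qed.
Lemma cover_nil i : cover [::] i = 0%N.
Proof. by rewrite /cover big_nil. Qed.
Lemma cover_cat bs1 bs2 i : cover (bs1 ++ bs2) i = (cover bs1 i + cover bs2 i)%N.
Proof. by rewrite /cover big_cat. Qed.

Lemma NF_strong t : forall q : nvec, (\sum_i q i)%N = t -> (forall i, q i <= nsz i)%N ->
  exists bs, [/\ all ncfg bs, forall i, cover bs i = q i &
     bs = [::] \/ exists b rest, bs = b :: rest /\ S * (size rest)%:R + load b <= 2 * load q].
Proof.
elim: t => [|t IH] q sq qle.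
  exists [::]; split => //; last by left.
  move=> i; rewrite cover_nil; apply/esym/eqP; rewrite -leqn0.
  by rewrite -sq (bigD1 i) //= leq_addr.
have [i qi] : exists i, (0 < q i)%N.
  apply/existsP; apply: contraLR (ltn0Sn t) => /existsPn H.
  rewrite -sq -leqNgt leqn0 sum_nat_eq0; apply/forallP => i; apply/implyP=> _.
  by move: (H i); rewrite lt0n negbK.
have [q' qE] : exists q' : nvec, q = addv q' i.
  exists [ffun j => (q j - (j == i))%N].
  apply/ffunP => j; rewrite !ffunE; case: eqP => [->|_] /=; [move: qi; set a := q i; lia | lia].
have sumaddv (v : nvec) : (\sum_j (addv v i) j = \sum_j v j + 1)%N.
  rewrite (eq_bigr (fun j => v j + (j == i))%N); last by move=> j _; rewrite ffunE.
  rewrite big_split /=; congr (_ + _)%N.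
  by rewrite (bigD1 i) //= eqxx big1 // => j /negbTE ->.
have sq' : (\sum_j q' j)%N = t.
  by apply/eqP; rewrite -eqSS -addn1 -sumaddv -qE sq.
have q'le j : (q' j <= nsz j)%N by move: (qle j); rewrite qE ffunE; apply: leq_trans; apply: leq_addr.
have [bs' [ncf cov inv]] := IH q' sq' q'le.
have nz j : (0 < nsz j)%N by apply: nsz_pos.
have ecfg : ncfg (addv zv i).
  rewrite /ncfg load_addv load_zv add0r; apply/andP; split; last by case/andP: (csz_pos i).
  apply/forallP => j; rewrite !ffunE; case: eqP => _; rewrite ?add0n //; exact: nz.
case: inv => [bs0|[b [rest [brest inv]]]].
  exists [:: addv zv i]; split.
  - by rewrite /= ecfg.
  - move=> j; rewrite cover_cons cover_nil qE !ffunE -cov bs0 cover_nil; lia.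
  - right; exists (addv zv i), [::]; split => //=.
    rewrite load_addv load_zv qE load_addv mulr0 !add0r.
    have := load_ge0 q'; have := csz_ge0 i; lra.
have bcfg : ncfg b by move: ncf; rewrite brest /= => /andP [].
have ble j : (b j <= q' j)%N by rewrite -cov brest cover_cons leq_addr.
have [fit|nofit] := boolP (load b + csz i <= S).
  exists (addv b i :: rest); split.
  - move: ncf; rewrite brest /= => /andP [_ ->]; rewrite andbT /ncfg load_addv fit andbT.
    apply/forallP => j; rewrite ffunE; move: (ble j) (qle j); rewrite qE ffunE; lia.
  - move=> j; rewrite cover_cons ffunE qE ffunE -cov brest cover_cons; lia.
  - right; exists (addv b i), rest; split => //.
    rewrite load_addv qE load_addv; have := csz_ge0 i; lra.
exists (addv zv i :: b :: rest); split.
- by rewrite /= ecfg -/(all ncfg (b :: rest)) -brest.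
- move=> j; rewrite cover_cons -brest cov qE !ffunE; lia.
- right; exists (addv zv i), (b :: rest); split => //.
  rewrite load_addv load_zv add0r qE load_addv /= -addn1 natrD mulrDr mulr1.
  move: nofit; rewrite -ltNge => nofit; lra.
Qed.


Lemma NF (q : nvec) : (forall i, q i <= nsz i)%N ->
  exists bs, [/\ all ncfg bs, forall i, cover bs i = q i & S * (size bs)%:R <= 2 * load q + S].
Proof.
move=> qle; have [bs [H1 H2 H3]] := NF_strong (erefl (\sum_i q i)%N) qle.
exists bs; split => //; case: H3 => [->|[b [rest [-> inv]]]].
  rewrite /=; have := load_ge0 q; have := Spos; lra.
rewrite /= -addn1 natrD mulrDr mulr1; have := load_ge0 b; lra.
Qed.

Lemma load_add (q1 q2 : nvec) : load [ffun i => (q1 i + q2 i)%N] = load q1 + load q2.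
Proof.
rewrite /load -big_split /=; apply: eq_bigr => i _; by rewrite ffunE natrD mulrDl.
Qed.

Lemma layered K : forall q : nvec, (forall i, q i <= K * nsz i)%N ->
  exists bs, [/\ all ncfg bs, forall i, (q i <= cover bs i)%N &
    S * (size bs)%:R <= 2 * load q + K%:R * S].
Proof.
elim: K => [|K IH] q qle.
  exists [::]; split => //=; first by move=> i; move: (qle i); rewrite mul0n cover_nil.
  by have := load_ge0 q; have := Spos; lra.
have [q1 [q2 [qE q1le q2le]]] : exists q1 q2 : nvec,
    [/\ q = [ffun i => (q1 i + q2 i)%N], forall i, (q1 i <= nsz i)%N &
         forall i, (q2 i <= K * nsz i)%N].
  exists [ffun i => minn (q i) (nsz i)], [ffun i => (q i - nsz i)%N]; split.
  - by apply/ffunP => i; rewrite !ffunE minnE subnK ?leq_subr.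
  - by move=> i; rewrite ffunE geq_minr.
  - by move=> i; move: (qle i); rewrite ffunE mulSn; move: (q i) (nsz i) => a b; lia.
have [bs1 [A1 B1 C1]] := NF q1le.
have [bs2 [A2 B2 C2]] := IH q2 q2le.
exists (bs1 ++ bs2); split.
- by rewrite all_cat A1 A2.
- by move=> i; rewrite cover_cat B1 qE ffunE leq_add2l.
- rewrite size_cat natrD qE load_add -addn1 natrD; have := Spos; lra.
Qed.


Lemma locate (P : nat -> nat) N s : (forall t, P t <= P t.+1)%N -> P 0%N = 0%N ->
  (s < P N)%N -> exists2 b, (b < N)%N & (P b <= s < P b.+1)%N.
Proof.
move=> mono P0; elim: N => [|N IH] sN; first by rewrite P0 in sN.
case: (ltnP s (P N)) => h.
  by case: (IH h) => b bN hb; exists b => //; apply: leqW.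
by exists N => //; rewrite h sN.
Qed.

Lemma card_window (T : finType) (A : {pred T}) (g : T -> nat) lo d :
  {in A &, injective g} -> (forall x, x \in A -> lo <= g x < lo + d)%N -> (#|A| <= d)%N.
Proof.
move=> inj H; rewrite cardE -(size_map g) -[d](size_iota lo); apply: uniq_leq_size.
  rewrite map_inj_in_uniq ?enum_uniq // => x y; rewrite !mem_enum; exact: inj.
move=> y /mapP [x]; rewrite mem_enum => /H xA ->; by rewrite mem_iota.
Qed.

Lemma slot_inj (nu l l' t t' : nat) : (t < nu)%N -> (t' < nu)%N ->
  (l * nu + t = l' * nu + t')%N -> l = l' /\ t = t'.
Proof.
move=> tn tn' e.
have ll : l = l'.
  case: (ltngtP l l') => // h.
  - have : (l.+1 * nu <= l' * nu)%N by rewrite leq_mul2r h orbT.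
    rewrite mulSn; lia.
  - have : (l'.+1 * nu <= l * nu)%N by rewrite leq_mul2r h orbT.
    rewrite mulSn; lia.
by split => //; move: e; rewrite ll => /eqP; rewrite eqn_add2l => /eqP.
Qed.

Definition setTr (j : 'I_n) : {set 'I_n} := [set j' : 'I_n | (j' < j)%N && (cls j' == cls j)]%SET.
Definition tr j := #|setTr j|.

Lemma tr_lt j : (tr j < nsz (cls j))%N.
Proof.
rewrite nszE /tr; apply: proper_card; apply/properP; split.
  by apply/fintype.subsetP => x; rewrite !inE => /andP [_ ->].
by exists j; rewrite !inE ?eqxx ?ltnn.
Qed.

Lemma tr_lt_lt j j' : cls j = cls j' -> (j < j')%N -> (tr j < tr j')%N.
Proof.
move=> cj jj; have nin : j \notin setTr j by rewrite inE ltnn.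
have sub : j |: setTr j \subset setTr j'.
  apply/fintype.subsetP => x; rewrite !inE => /orP [/eqP ->|/andP [xj /eqP cx]].
    by rewrite jj cj eqxx.
  by rewrite (ltn_trans xj jj) cx cj eqxx.
by move: (subset_leq_card sub); rewrite cardsU1 nin.
Qed.

Lemma tr_inj j j' : cls j = cls j' -> tr j = tr j' -> j = j'.
Proof.
move=> cj tj; case: (ltngtP j j') => h.
- by move: (tr_lt_lt cj h); rewrite tj ltnn.
- by move: (tr_lt_lt (esym cj) h); rewrite tj ltnn.
- exact: val_inj.
Qed.

Lemma packA (bs : seq nvec) : all ncfg bs -> (forall i, k * nsz i <= cover bs i)%N ->
  packable S c k (size bs).
Proof.
move=> allc covk; set N := size bs.
pose dd (t : nat) (i : 'I_m) := nth zv bs t i.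
pose P i t := (\sum_(0 <= b < t) dd b i)%N.
have PS i t : P i t.+1 = (P i t + dd t i)%N by rewrite /P big_nat_recr.
have P0 i : P i 0%N = 0%N by rewrite /P big_geq.
have PN i : P i N = cover bs i by rewrite /cover (big_nth zv).
have ddcfg (b : 'I_N) : ncfg (nth zv bs b) by apply: (allP allc); rewrite mem_nth.
have ddle (b : 'I_N) i : (dd b i <= nsz i)%N.
  by move: (ddcfg b) => /andP [/forallP H _]; apply: H.
pose s (j : 'I_n) (l : 'I_k) := (l * nsz (cls j) + tr j)%N.
have sk j l : (s j l < P (cls j) N)%N.
  rewrite PN; apply: leq_trans (covk _); rewrite /s.
  have := tr_lt j; have : (l.+1 <= k)%N := ltn_ord l.
  move=> h1 h2; apply: leq_trans (_ : (l.+1 * nsz (cls j) <= _)%N); last by rewrite leq_mul2r h1 orbT.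
  by rewrite mulSn addnC ltn_add2r.
have H : forall j, exists g : 'I_k -> 'I_N,
    forall l, (P (cls j) (g l) <= s j l < P (cls j) (g l).+1)%N.
  move=> j; apply: (@fin_all_exists _ (fun _ => 'I_N) (fun l (b : 'I_N) => (P (cls j) b <= s j l < P (cls j) b.+1)%N)) => l.
  have mono t : (P (cls j) t <= P (cls j) t.+1)%N by rewrite PS leq_addr.
  have [b bN hb] := locate mono (P0 _) (sk j l).
  by exists (Ordinal bN).
have [f Hf] := @fin_all_exists _ (fun _ => 'I_k -> 'I_N) (fun j (g : 'I_k -> 'I_N) => forall l, (P (cls j) (g l) <= s j l < P (cls j) (g l).+1)%N) H.
exists f; split.
  move=> j l l' e; apply: val_inj.
  have h1 := Hf j l; have h2 := Hf j l'; rewrite e PS in h1; rewrite PS in h2.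
  have h3 := ddle (f j l') (cls j); have h4 := tr_lt j.
  move: h1 h2 h3 h4; rewrite /s.
  move: (P _ _) (dd _ _) (nsz _) (tr j) => p d nu t.
  case: (ltngtP l l') => // h.
  - have : (l.+1 * nu <= l' * nu)%N by rewrite leq_mul2r h orbT.
    rewrite mulSn; move: (l * nu)%N (l' * nu)%N => x y; lia.
  - have : (l'.+1 * nu <= l * nu)%N by rewrite leq_mul2r h orbT.
    rewrite mulSn; move: (l * nu)%N (l' * nu)%N => x y; lia.
move=> b.
rewrite (partition_big (fun p : 'I_n * 'I_k => cls p.1) predT) //=.
apply: le_trans (_ : \sum_i (dd b i)%:R * csz i <= S); last first.
  by move: (ddcfg b) => /andP [_].
apply: ler_sum => i _.
rewrite (eq_bigr (fun _ => csz i)); last by move=> p /andP [_ /eqP <-]; rewrite csz_cls.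
rewrite sumr_const mulr_natl; apply: ler_wpMn2l; first exact: csz_ge0.

apply: (@card_window _ _ (fun p : 'I_n * 'I_k => s p.1 p.2) (P i b)).
  move=> [j l] [j' l']; rewrite !unfold_in /= => /andP [_ /eqP cj] /andP [_ /eqP cj'] e.
  move: e; rewrite /s cj' -cj => e.
  have [] := slot_inj (tr_lt j) (_ : (tr j' < nsz (cls j))%N) e.
    by rewrite cj -cj' tr_lt.
  move=> ll tt.
  have jj : j = j' by apply: tr_inj; rewrite ?cj ?cj'.
  by subst j'; congr (_, _); apply: val_inj.
move=> [j l]; rewrite unfold_in /= => /andP [/eqP fb /eqP cj].
have := Hf j l; rewrite fb cj PS; by [].
Qed.


Local Notation cfg := (@is_config R S n c).
Local Notation cand := (Defs.cand c).

Definition toN (a : cand) : nvec := [ffun i => nat_of_ord (a i)].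
Lemma cfg_toN a : cfg a = ncfg (toN a).
Proof.
rewrite /is_config /ncfg /load; congr (_ && _).
  by apply: eq_forallb => i; rewrite ffunE.
by congr (_ <= _); apply: eq_bigr => i _; rewrite ffunE.
Qed.

Definition yc (y : cand -> nat) a := if cfg a then y a else 0%N.
Definition rep (y : cand -> nat) : seq nvec :=
  flatten [seq nseq (yc y a) (toN a) | a <- index_enum cand].

Lemma sum_nseq (F : nvec -> nat) t x : (\sum_(b <- nseq t x) F b = t * F x)%N.
Proof. elim: t => [|t IH]; first by rewrite big_nil. by rewrite /= big_cons IH mulSn. Qed.

Lemma rep_sum (F : nvec -> nat) y :
  (\sum_(b <- rep y) F b = \sum_(a | cfg a) y a * F (toN a))%N.
Proof.
rewrite /rep big_flatten big_map [RHS]big_mkcond /=; apply: eq_bigr => a _.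
by rewrite sum_nseq /yc; case: ifP.
Qed.

Lemma rep_size y : size (rep y) = (\sum_(a | cfg a) y a)%N.
Proof. by rewrite -sum1_size rep_sum; apply: eq_bigr => a _; rewrite muln1. Qed.

Lemma rep_cover y i : cover (rep y) i = (\sum_(a | cfg a) y a * a i)%N.
Proof. by rewrite /cover rep_sum; apply: eq_bigr => a _; rewrite ffunE. Qed.

Lemma rep_all y : all ncfg (rep y).
Proof.
apply/allP => b /flattenP [s /mapP [a _ ->]]; rewrite mem_nseq /yc => /andP [].
by case: ifP => // ca _ /eqP ->; rewrite -cfg_toN.
Qed.


Definition supp (x : cand -> R) := [set a | cfg a && (x a != 0)]%SET.

Lemma round (x : cand -> R) : lp_feasible S k x -> (#|supp x| <= m)%N ->
  exists bs, [/\ all ncfg bs, forall i, (k * nsz i <= cover bs i)%N &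
    (size bs)%:R <= lp_value S x + (m%:R + k%:R) / 2].
Proof.
move=> [xge0 xeq] suppm.
pose t a := Num.truncn (x a).
have tle a : cfg a -> (t a)%:R <= x a < (t a).+1%:R.
  by move=> ca; apply: truncn_itv; apply: xge0.
pose Tsum := \sum_(a | cfg a) ((t a)%:R : R).
pose F := \sum_(a | cfg a) (x a - (t a)%:R).
have valE : lp_value S x = Tsum + F.
  by rewrite /lp_value /Tsum /F -big_split /=; apply: eq_bigr => a _; rewrite addrC subrK.
have Fge0 a : cfg a -> 0 <= x a - (t a)%:R.
  by move=> ca; case/andP: (tle a ca); rewrite subr_ge0.
pose y1 a := (t a + (x a != (t a)%:R))%N.
have y1ge a : cfg a -> x a <= (y1 a)%:R.
  move=> ca; rewrite /y1; case: eqP => [->|_]; first by rewrite addn0.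
  by rewrite addn1; case/andP: (tle a ca) => _ /ltW.
have cov1 i : (k * nsz i <= cover (rep y1) i)%N.
  rewrite rep_cover -(ler_nat R) -xeq natr_sum; apply: ler_sum => a ca.
  by rewrite natrM [X in _ <= X]mulrC; apply: ler_wpM2l; [exact: ler0n | exact: y1ge].
have sz1 : (size (rep y1))%:R <= Tsum + m%:R.
  rewrite rep_size natr_sum /y1.
  rewrite (eq_bigr (fun a => (t a)%:R + ((x a != (t a)%:R) : nat)%:R)); last by move=> a _; rewrite natrD.
  rewrite big_split /= lerD2l -natr_sum ler_nat; apply: leq_trans suppm.
  have cE : #|supp x| = (\sum_(a | cfg a) nat_of_bool (x a != 0%R))%N.
    rewrite -sum1_card (eq_bigl (fun a => cfg a && (x a != 0%R))); last by move=> a; rewrite inE.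
    by rewrite big_mkcondr /=; apply: eq_bigr => a _; case: (x a != 0%R).
  rewrite cE; apply: leq_sum => a ca; case: eqP => // xt.
  case: eqP => // x0; exfalso; apply: xt; by rewrite /t x0 truncn0.
have Tle i : (\sum_(a | cfg a) t a * a i <= k * nsz i)%N.
  rewrite -(ler_nat R) -xeq natr_sum; apply: ler_sum => a ca.
  rewrite natrM [X in X <= _]mulrC; apply: ler_wpM2l; first exact: ler0n.
  by case/andP: (tle a ca).
pose q : nvec := [ffun i => (k * nsz i - \sum_(a | cfg a) t a * a i)%N].
have qle i : (q i <= k * nsz i)%N by rewrite ffunE leq_subr.
have [bs2 [A2 B2 C2]] := layered qle.
have qR i : (q i)%:R = \sum_(a | cfg a) (a i)%:R * (x a - (t a)%:R) :> R.
  rewrite ffunE natrB ?Tle // -xeq natr_sum -sumrB; apply: eq_bigr => a _.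
  by rewrite natrM mulrBr (mulrC (t a)%:R).
have loadq : load q <= S * F.
  rewrite /load (eq_bigr (fun i => \sum_(a | cfg a) (x a - (t a)%:R) * ((a i)%:R * csz i))); last first.
    move=> i _; rewrite qR mulr_suml; apply: eq_bigr => a _; ring.
  rewrite exchange_big /= /F mulr_sumr; apply: ler_sum => a ca.
  rewrite -mulr_sumr [X in _ <= X]mulrC; apply: ler_wpM2l; first exact: Fge0.
  by move: ca; rewrite /is_config => /andP [_].
have sz2 : (size bs2)%:R <= 2 * F + k%:R.
  rewrite -(@ler_pM2l _ S) //; apply: le_trans C2 _; have := Spos; nra.
pose bs := rep t ++ bs2.
have cov2 i : (k * nsz i <= cover bs i)%N.
  rewrite cover_cat rep_cover; apply: leq_trans (leq_add (leqnn _) (B2 i)).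
  rewrite ffunE; move: (Tle i); move: (\sum_(a | cfg a) _)%N (k * nsz i)%N => u v; lia.
have szbs : (size bs)%:R <= Tsum + 2 * F + k%:R.
  rewrite size_cat natrD rep_size natr_sum -/Tsum; lra.
have Fge : 0 <= F by apply: sumr_ge0 => a ca; apply: Fge0.
case: (leqP (size (rep y1)) (size bs)) => h.
  exists (rep y1); split => //; first exact: rep_all.
  rewrite valE; move: h; rewrite -(ler_nat R) => h; lra.
exists bs; split => //; first by rewrite all_cat rep_all A2.
rewrite valE; move/ltnW: h; rewrite -(ler_nat R) => h; lra.
Qed.


Lemma exists_min (T : finType) (P : pred T) (G : T -> R) a0 :
  P a0 -> exists2 a, P a & forall b, P b -> G a <= G b.
Proof. move=> Pa0; case: (@arg_minP _ R T a0 P G Pa0) => a Pa H; by exists a. Qed.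

Lemma step (x : cand -> R) : lp_feasible S k x -> (m < #|supp x|)%N ->
  exists x', [/\ lp_feasible S k x', lp_value S x' <= lp_value S x & (#|supp x'| < #|supp x|)%N].
Proof.
move=> [xge0 xeq] big.
set A := supp x.
pose M : 'M[R]_(#|A|, m) := \matrix_(j, i) ((@enum_val _ (mem A) j : cand) i)%:R.
pose K := kermx M.
have Knz : K != 0.
  rewrite -mxrank_eq0 /K mxrank_ker; have := rank_leq_col M.
  move: (\rank M) => r; move: big; move: #|A| => p; lia.
have [j0 hj0] : exists j0, row j0 K != 0.
  case: (pickP (fun j => row j K != 0)) => [j0 hj0|H]; first by exists j0.
  exfalso; move/negP: Knz; apply; apply/eqP/row_matrixP => j.
  by move: (H j) => /negbFE/eqP ->; rewrite row0.
pose u := row j0 K.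
have uM : u *m M = 0 by rewrite /u -row_mul mulmx_ker row0.
have [j1 hj1] : exists j1, u ord0 j1 != 0.
  case: (pickP (fun j => u ord0 j != 0)) => [j1 h|H]; first by exists j1.
  exfalso; move/negP: hj0; apply; apply/eqP/rowP => j.
  by move: (H j) => /negbFE/eqP; rewrite !mxE => ->.
pose l0 (a : cand) := \sum_(j | @enum_val _ (mem A) j == a) u ord0 j.
have l0E j : l0 (enum_val j) = u ord0 j.
  rewrite /l0 (eq_bigl (fun j' => j' == j)) ?big_pred1_eq // => j'.
  by rewrite (inj_eq enum_val_inj).
have l0A a : l0 a != 0 -> a \in A.
  apply: contraR => aA; rewrite /l0 big_pred0 // => j.
  by apply: contraNF aA => /eqP <-; apply: enum_valP.
have Acfg a : a \in A -> cfg a by rewrite inE => /andP [].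
have l0sum (G : cand -> R) : \sum_(a | cfg a) l0 a * G a = \sum_j u ord0 j * G (enum_val j).
  rewrite (partition_big (@enum_val _ (mem A)) predT) //= big_mkcond /=.
  apply: eq_bigr => a _; case: ifP => ca.
    rewrite /l0 mulr_suml; apply: eq_bigr => j /eqP ->; by [].
  rewrite big1 // => j /eqP ej; exfalso; move: ca; rewrite -ej.
  by move: (enum_valP j) => /Acfg ->.
pose sig := \sum_(a | cfg a) l0 a.
pose sg : R := if sig <= 0 then 1 else -1.
pose lam a := sg * l0 a.
have sgnz : sg != 0 by rewrite /sg; case: ifP => _; rewrite ?oppr_eq0 oner_eq0.
have lamA a : lam a != 0 -> a \in A by rewrite /lam mulf_eq0 negb_or => /andP [_ /l0A].
have lamsum : \sum_(a | cfg a) lam a <= 0.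
  rewrite /lam -mulr_sumr -/sig /sg; case: ifP => [h|/negbT]; first by rewrite mul1r.
  rewrite -ltNge => h.
  by rewrite mulN1r oppr_le0 ltW.
have lameq i : \sum_(a | cfg a) (a i)%:R * lam a = 0.
  rewrite (eq_bigr (fun a => sg * (l0 a * (a i)%:R))); last by move=> a _; rewrite /lam; ring.
  rewrite -mulr_sumr l0sum.
  have : (u *m M) ord0 i = 0 by rewrite uM mxE.
  rewrite mxE => e.
  rewrite (eq_bigr (fun j => u ord0 j * M j i)); last by move=> j _; rewrite !mxE.
  by rewrite e mulr0.
have [a1 [ca1 la1]] : exists a, cfg a /\ lam a < 0.
  apply: contrapT => H.
  have ge : forall a, cfg a -> 0 <= lam a.
    move=> a ca; rewrite leNgt; apply/negP => h; apply: H; by exists a.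
  have h0 : \sum_(a | cfg a) lam a = 0 by apply/eqP; rewrite eq_le lamsum sumr_ge0.
  have z := psumr_eq0P ge h0.
  have : lam (enum_val j1) != 0 by rewrite /lam mulf_neq0 // l0E.
  by rewrite z ?eqxx // Acfg // enum_valP.
have [as_ /andP [cas las] amin] := @exists_min _ (fun a => cfg a && (lam a < 0)) (fun a => x a / - lam a) a1 (introT andP (conj ca1 la1)).
pose tau := x as_ / - lam as_.
have taug : 0 <= tau by rewrite /tau divr_ge0 ?xge0 // oppr_ge0 ltW.
pose x' a := x a + tau * lam a.
exists x'; split.
- split.
  + move=> a ca; rewrite /x'; case: (ltP (lam a) 0) => h.
      have hm := amin a (introT andP (conj ca h)).
      have hp : 0 < - lam a by rewrite oppr_gt0.
      have := ler_wpM2r (ltW hp) hm; rewrite divfK ?lt0r_neq0 // => h2.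
      rewrite -/tau in h2; lra.
    by rewrite addr_ge0 ?xge0 // mulr_ge0.
  + move=> i; rewrite /x' (eq_bigr (fun a : cand => (a i)%:R * x a + tau * ((a i)%:R * lam a))); last by move=> a _; ring.
    by rewrite big_split /= xeq -mulr_sumr lameq mulr0 addr0.
- rewrite /lp_value /x' big_split /= -mulr_sumr gerDl; exact: mulr_ge0_le0.
- apply: proper_card; apply/properP; split.
    apply/fintype.subsetP => a; rewrite !inE /x' => /andP [ca h]; rewrite ca /=.
    case: (eqVneq (x a) 0) => // x0; exfalso; move: h; rewrite x0 add0r.
    case: (eqVneq (lam a) 0) => [->|/lamA]; first by rewrite mulr0 eqxx.
    by rewrite inE ca x0 eqxx.
  exists as_.
    by apply: lamA; exact: ltr0_neq0.
  rewrite inE negb_and /x' /tau; apply/orP; right; apply/negPn/eqP.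
  field; exact: ltr0_neq0.
Qed.


Lemma reduce (x : cand -> R) : lp_feasible S k x ->
  exists x', [/\ lp_feasible S k x', lp_value S x' <= lp_value S x & (#|supp x'| <= m)%N].
Proof.
move=> fx; move: {2}#|supp x| (leqnn #|supp x|) => p.
elim: p x fx => [|p IH] x fx hp.
  by exists x; split => //; apply: leq_trans hp _.
case: (leqP #|supp x| m) => h; first by exists x.
have [x1 [f1 v1 s1]] := step fx h.
have [x2 [f2 v2 s2]] := IH x1 f1 (leq_trans s1 hp).
by exists x2; split => //; apply: le_trans v2 v1.
Qed.

Lemma card_inj_sub (T T' : finType) (A : {pred T}) (B : {pred T'}) (g : T -> T') :
  {in A &, injective g} -> (forall x, x \in A -> g x \in B) -> (#|A| <= #|B|)%N.
Proof.
move=> inj H; rewrite (cardE A) -(size_map g) (cardE B); apply: uniq_leq_size.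
  rewrite map_inj_in_uniq ?enum_uniq // => x y; rewrite !mem_enum; exact: inj.
move=> y /mapP [x]; rewrite mem_enum => xA ->; rewrite mem_enum; exact: H.
Qed.

Lemma pack_lp N (f : 'I_n -> 'I_k -> 'I_N) : packing S c f ->
  exists x : cand -> R, lp_feasible S k x /\ lp_value S x = N%:R.
Proof.
move=> [finj fload].
pose cnt (b : 'I_N) i := #|[pred p : 'I_n * 'I_k | (f p.1 p.2 == b) && (cls p.1 == i)]|.
have cntle b i : (cnt b i <= nsz i)%N.
  rewrite nszE; apply: (@card_inj_sub _ _ _ _ (fun p : 'I_n * 'I_k => p.1)).
    move=> [j l] [j' l']; rewrite !inE /= => /andP [/eqP fb _] /andP [/eqP fb' _] jj.
    subst j'; congr (_, _); apply: (finj j); by rewrite fb fb'.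
  by move=> [j l]; rewrite !inE /= => /andP [_ ->].
pose cb (b : 'I_N) : cand := [ffun i => inord (cnt b i)].
have cbE b i : (cb b i : nat) = cnt b i.
  by rewrite ffunE inordK // ltnS (leq_trans (cntle b i)) ?nsz_le.
have cbcfg b : cfg (cb b).
  rewrite /is_config; apply/andP; split.
    by apply/forallP => i; rewrite cbE cntle.
  apply: le_trans (fload b).
  rewrite (partition_big (fun p : 'I_n * 'I_k => cls p.1) predT) //=.
  apply: ler_sum => i _; rewrite (eq_bigr (fun _ => csz i)); last first.
    by move=> p /andP [_ /eqP <-]; rewrite csz_cls.
  by rewrite sumr_const cbE mulr_natl.
pose x (a : cand) := \sum_(b | cb b == a) (1 : R).
exists x; split; first split.
- by move=> a _; apply: sumr_ge0.
- move=> i.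
  rewrite (eq_bigr (fun a => \sum_(b | cb b == a) ((cb b i : nat)%:R : R))); last first.
    move=> a _; rewrite mulr_sumr; apply: eq_bigr => b /eqP ->; by rewrite mulr1.
  have -> : \sum_(a | cfg a) \sum_(b | cb b == a) ((cb b i : nat)%:R : R) =
           \sum_b ((cb b i : nat)%:R) by rewrite [RHS](partition_big cb cfg).
  rewrite (eq_bigr (fun b => (cnt b i)%:R)); last by move=> b _; rewrite cbE.
  rewrite -natr_sum; congr (_%:R).
  rewrite /cnt (eq_bigr (fun b => \sum_(p | (cls p.1 == i) && (f p.1 p.2 == b)) 1)%N); last first.
    move=> b _; rewrite -sum1_card; apply: eq_bigl => p; by rewrite !inE andbC.
  rewrite -(partition_big (fun p : 'I_n * 'I_k => f p.1 p.2) predT) //=.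
  rewrite big_mkcond /= -(pair_big predT predT (fun j (l : 'I_k) => if cls j == i then 1 else 0)%N) /=.
  rewrite (eq_bigr (fun j => (cls j == i) * k)%N); last first.
    move=> j _; case: (cls j == i) => /=; last by rewrite big1.
    by rewrite big_const_ord iter_addn_0 mul1n.
  rewrite -big_distrl /= [RHS]mulnC nszE -sum1_card; congr (_ * _)%N.
  rewrite [RHS]big_mkcond /=.
  by apply: eq_bigr => j _; rewrite inE; case: (cls j == i).
- rewrite /lp_value /x [RHS](_ : _ = \sum_(b : 'I_N) (1 : R)); last by rewrite sumr_const card_ord.
  by rewrite [RHS](partition_big cb cfg).
Qed.


Lemma packable_ex : exists N, packable S c k N.
Proof.
have [bs [A1 B1 _]] := @layered k [ffun i => (k * nsz i)%N] (fun i => eq_leq (ffunE _ _)).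
exists (size bs); apply: packA => // i; by move: (B1 i); rewrite ffunE.
Qed.

Lemma feas_ex : exists x : cand -> R, lp_feasible S k x.
Proof.
have [N [f pf]] := packable_ex; have [x [fx _]] := pack_lp pf; by exists x.
Qed.

Lemma value_ge0 (x : cand -> R) : lp_feasible S k x -> 0 <= lp_value S x.
Proof. by move=> [xge0 _]; apply: sumr_ge0. Qed.

Lemma VDk_le (x : cand -> R) : lp_feasible S k x -> VDk c k <= S * lp_value S x.
Proof.
move=> [xge0 xeq].
have sumc : \sum_j c j = \sum_i (nsz i)%:R * csz i.
  rewrite (partition_big cls predT) //=; apply: eq_bigr => i _.
  rewrite (eq_bigr (fun _ => csz i)); last by move=> j /eqP <-; rewrite csz_cls.
  rewrite sumr_const mulr_natl nszE; congr (_ *+ _); apply: eq_card => j; by rewrite !inE.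
rewrite /VDk sumc mulr_sumr.
rewrite (eq_bigr (fun i => \sum_(a | cfg a) x a * ((a i)%:R * csz i))); last first.
  move=> i _; rewrite mulrA -natrM -xeq mulr_suml; apply: eq_bigr => a _; ring.
rewrite exchange_big /= /lp_value mulr_sumr; apply: ler_sum => a ca.
rewrite -mulr_sumr mulrC; apply: ler_wpM2r; first exact: xge0.
by move: ca; rewrite /is_config => /andP [_].
Qed.

Lemma round_pack (x : cand -> R) : lp_feasible S k x ->
  exists2 N, packable S c k N & N%:R <= lp_value S x + (m%:R + k%:R) / 2.
Proof.
move=> fx; have [x' [fx' vx' sx']] := reduce fx.
have [bs [A1 B1 C1]] := round fx' sx'.
exists (size bs); first exact: packA.
by apply: le_trans C1 _; rewrite lerD2r.
Qed.

Lemma main : [/\ VDk c k <= S * LIN S c k, S * LIN S c k <= S * OPT S c k &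
      S * OPT S c k <= S * LIN S c k + S * (m%:R + k%:R) / 2].
Proof.
pose Lset := [set v | exists x : cand -> R, lp_feasible S k x /\ v = lp_value S x]%classic.
pose Oset := [set (N%:R : R) | N in packable S c k]%classic.
have LIN_E : LIN S c k = inf Lset by [].
have OPT_E : OPT S c k = inf Oset by [].
have Lne : (Lset !=set0)%classic.
  by have [x fx] := feas_ex; exists (lp_value S x); exists x.
have One : (Oset !=set0)%classic.
  by have [N pN] := packable_ex; exists N%:R; exists N.
have Llb : has_lbound Lset.
  by exists 0 => v [x [fx ->]]; apply: value_ge0.
have Olb : has_lbound Oset.
  by exists 0 => v [N _ <-]; apply: ler0n.
have LINle (x : cand -> R) : lp_feasible S k x -> LIN S c k <= lp_value S x.
  by move=> fx; rewrite LIN_E; apply: (ge_inf Llb); exists x.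
have OPTle N : packable S c k N -> OPT S c k <= N%:R.
  by move=> pN; rewrite OPT_E; apply: (ge_inf Olb); exists N.
split.
- have : VDk c k / S <= LIN S c k.
    rewrite LIN_E; apply: lb_le_inf => // v [x [fx ->]].
    by rewrite ler_pdivrMr // mulrC VDk_le.
  by rewrite ler_pdivrMr // mulrC.
- apply: ler_wpM2l; first exact: ltW.
  rewrite OPT_E; apply: lb_le_inf => // v [N [f pf] <-].
  have [x [fx vx]] := pack_lp pf; rewrite -vx; exact: LINle.
- have : OPT S c k - (m%:R + k%:R) / 2 <= LIN S c k.
    rewrite LIN_E; apply: lb_le_inf => // v [x [fx ->]].
    have [N pN hN] := round_pack fx; have := OPTle N pN; lra.
  move=> h; rewrite -mulrA -mulrDr; apply: ler_wpM2l; first exact: ltW.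
  lra.
Qed.

End Proofs.

Theorem lemma11 (R : realType) (S : R) (n : nat) (c : 'I_n -> R) (k : nat) :
  0 < S -> (forall i, 0 < c i <= S) -> (1 <= k)%N ->
  [/\ VDk c k <= S * LIN S c k,
      S * LIN S c k <= S * OPT S c k &
      S * OPT S c k <= S * LIN S c k + S * ((mD c)%:R + k%:R) / 2].
Proof. by move=> Spos cpos _; apply: main. Qed.
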